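(* Consider the homogeneous all-to-all network described in the context with coupling $\varepsilon$, $(N-1)\varepsilon<1$, a neuronal partial reset $R$, and let $2\le a_1\le N$. Consider the conditions, for $a\in\{1,\dots,a_1-1\}$, (A) $U^{-1}\big(R((a_1-1)\varepsilon)\big)-U^{-1}\big(R((a_1-1)\varepsilon-a\varepsilon)\big)\le U^{-1}\big(1-(N-a_1)\varepsilon\big)-U^{-1}\big(1-(N-a_1)\varepsilon-a\varepsilon\big)$, (B) $U^{-1}\big(R((a_1-1)\varepsilon)+(N-a_1)\varepsilon\big)-U^{-1}\big(R((a_1-1)\varepsilon-a\varepsilon)+(N-a_1)\varepsilon\big)\le1-U^{-1}(1-a\varepsilon)$. If $U$ is icpd, then (A) for all $a\in\{1,\dots,a_1-1\}$ is sufficient, and (B) for all $a\in\{1,\dots,a_1-1\}$ is necessary, for an avalanche of size $a_1$ to be invariant under return. If $U$ is dcpd, then (B) for all such $a$ is sufficient and (A) for all such $a$ is necessary.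
   Context: Model: $N$ units, phases $\phi_i$, rise function $U$ (smooth, $U'>0$, $U(0)=0$, $U(1)=1$), partial reset $R$ (monotonically increasing, $R(0)=0$; neuronal if $0\le R(\zeta)\le\zeta$ for $\zeta\ge0$). $H_\varepsilon(\phi)=U^{-1}(U(\phi)+\varepsilon)$, $J_\varepsilon(\phi)=U^{-1}(R(U(\phi)+\varepsilon-1))$, $S_\sigma(\phi)=\phi+\sigma$, $\bigodot_{r=p}^q(S_{\sigma_r}\circ H_{\varepsilon_r}):=S_{\sigma_q}\circ H_{\varepsilon_q}\circ\cdots\circ S_{\sigma_p}\circ H_{\varepsilon_p}$. Homogeneous all-to-all coupling: pulse strength $\varepsilon>0$ from every unit to every other unit, no self-coupling. Dynamics: between events phases increase at unit rate; when units reach phase $1$ an avalanche occurs: potentials $u_i=U(\phi_i)$ of all units are raised by $\varepsilon$ per firing unit other than themselves, any unit whose potential thereby reaches $\ge1$ also fires, iterating until no new unit crosses; a unit that does not fire has new phase $H_{k\varepsilon}(\phi_i)$, a firing unit has new phase $J_{k'\varepsilon}(\phi_i)$, where $k$ (resp. $k'$) is the number of firing units (other than itself). Firing sequence: for a state in which an avalanche of $a_1$ units is triggered by the unit(s) at phase $1$, list the avalanches until the trigger unit fires next as $\mathcal{F}=((a_1,\sigma_1),\dots,(a_m,\sigma_m))$, $a_r$ = size of the $r$-th avalanche, $\sigma_r\ge0$ the time between the $r$-th and next avalanche. $\mathcal{F}$ is admissible if it is realized by some state, and trigger invariant if the triggering unit(s) of the first avalanche are again at phase $1$ at the end. For a unit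 in the first avalanche with phase $\phi$ just before it, its phase at the end is $M_{\mathcal{F}}(\phi)=\big[\bigodot_{r=2}^m(S_{\sigma_r}\circ H_{a_r\varepsilon})\big]\circ S_{\sigma_1}\circ J_{(a_1-1)\varepsilon}(\phi)$. An avalanche of size $a_1$ is invariant under return if $M_{\mathcal{F}}(U^{-1}(1-a\varepsilon))\ge U^{-1}(1-a\varepsilon)$ for all $a\in\{1,\dots,a_1-1\}$ and all admissible trigger-invariant $\mathcal{F}$ with first avalanche size $a_1$. icpd/dcpd: with $\Delta H(\phi,\Delta\phi,\varepsilon)=H_\varepsilon(\phi+\Delta\phi)-H_\varepsilon(\phi)$ on $\mathcal{D}=\{0\le\varepsilon\le1,0\le\phi\le1,0\le\Delta\phi\le U^{-1}(1-\varepsilon)-\phi\}$, $U$ is icpd if $\partial_\phi\Delta H\ge0$ on $\mathcal{D}$ and dcpd if $\partial_\phi\Delta H\le0$ on $\mathcal{D}$. *)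

(* Defs.v *)
From Stdlib Require Import Reals Lra Lia List Bool.
Import ListNotations.
Open Scope R_scope.

Definition smooth (U : R -> R) : Prop :=
  exists D : nat -> R -> R, D 0%nat = U /\
    forall (n : nat) (x : R), derivable_pt_lim (D n) x (D (S n) x).

(* U smooth, U' > 0, U(0)=0, U(1)=1; Uinv is the inverse of U
   (a left inverse on all of R, hence the inverse on the range of U) *)
Definition rise_function (U Uinv : R -> R) : Prop :=
  smooth U /\
  (forall x l, derivable_pt_lim U x l -> 0 < l) /\
  U 0 = 0 /\ U 1 = 1 /\
  (forall x, Uinv (U x) = x).

Definition neuronal_reset (Rr : R -> R) : Prop :=
  (forall x y, x <= y -> Rr x <= Rr y) /\ Rr 0 = 0 /\
  (forall z, 0 <= z -> 0 <= Rr z <= z).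

Definition Hmap (U Uinv : R -> R) (e phi : R) : R := Uinv (U phi + e).
Definition Jmap (U Uinv Rr : R -> R) (e phi : R) : R := Uinv (Rr (U phi + e - 1)).

Definition DeltaH (U Uinv : R -> R) (phi dphi e : R) : R :=
  Hmap U Uinv e (phi + dphi) - Hmap U Uinv e phi.

Definition inD (Uinv : R -> R) (e phi dphi : R) : Prop :=
  0 <= e <= 1 /\ 0 <= phi <= 1 /\ 0 <= dphi <= Uinv (1 - e) - phi.

Definition icpd (U Uinv : R -> R) : Prop :=
  forall e phi dphi, inD Uinv e phi dphi ->
    exists l, derivable_pt_lim (fun p => DeltaH U Uinv p dphi e) phi l /\ 0 <= l.

Definition dcpd (U Uinv : R -> R) : Prop :=
  forall e phi dphi, inD Uinv e phi dphi ->
    exists l, derivable_pt_lim (fun p => DeltaH U Uinv p dphi e) phi l /\ l <= 0.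

Definition card (N : nat) (S : nat -> bool) : nat := length (filter S (seq 0 N)).

Definition at_one (phi : nat -> R) : nat -> bool :=
  fun i => if Req_EM_T (phi i) 1 then true else false.

Definition fire_step (U : R -> R) (N : nat) (eps : R) (phi : nat -> R)
  (S : nat -> bool) : nat -> bool :=
  fun i => orb (S i) (if Rle_dec 1 (U (phi i) + INR (card N S) * eps) then true else false).

(* set of units firing in the avalanche triggered at state phi
   (N rounds suffice for the iteration to stabilise) *)
Definition fireset (U : R -> R) (N : nat) (eps : R) (phi : nat -> R) : nat -> bool :=
  Nat.iter N (fire_step U N eps phi) (at_one phi).

Definition post (U Uinv Rr : R -> R) (N : nat) (eps : R) (phi : nat -> R) : nat -> R :=
  let S := fireset U N eps phi in
  let k := card N S in
  fun i => if S i then Jmap U Uinv Rr (INR (k - 1) * eps) (phi i)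
           else Hmap U Uinv (INR k * eps) (phi i).

Definition maxphase (N : nat) (phi : nat -> R) : R :=
  fold_right Rmax (phi 0%nat) (map phi (seq 0 N)).

Definition gap (N : nat) (phi : nat -> R) : R := 1 - maxphase N phi.

Definition evolve (U Uinv Rr : R -> R) (N : nat) (eps : R) (phi : nat -> R) (sigma : R)
  : nat -> R := fun i => post U Uinv Rr N eps phi i + sigma.

Definition valid_state (N : nat) (phi : nat -> R) : Prop :=
  (forall i, (i < N)%nat -> 0 <= phi i <= 1) /\ exists i, (i < N)%nat /\ phi i = 1.

(* avalanches 2..m: no trigger unit (set T) fires; the avalanche after the
   list is the next one, in which a trigger unit fires *)
Fixpoint runs (U Uinv Rr : R -> R) (N : nat) (eps : R) (T : nat -> bool)
  (phi : nat -> R) (F : list (nat * R)) : Prop :=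
  match F with
  | [] => exists i, (i < N)%nat /\ T i = true /\ fireset U N eps phi i = true
  | (a, sigma) :: rest =>
      (forall i, (i < N)%nat -> T i = true -> fireset U N eps phi i = false) /\
      card N (fireset U N eps phi) = a /\
      sigma = gap N (post U Uinv Rr N eps phi) /\
      runs U Uinv Rr N eps T (evolve U Uinv Rr N eps phi sigma) rest
  end.

Definition realizes (U Uinv Rr : R -> R) (N : nat) (eps : R) (phi : nat -> R)
  (F : list (nat * R)) : Prop :=
  valid_state N phi /\
  match F with
  | [] => False
  | (a, sigma) :: rest =>
      card N (fireset U N eps phi) = a /\
      sigma = gap N (post U Uinv Rr N eps phi) /\
      runs U Uinv Rr N eps (at_one phi) (evolve U Uinv Rr N eps phi sigma) rest
  end.

Fixpoint final (U Uinv Rr : R -> R) (N : nat) (eps : R) (phi : nat -> R)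
  (F : list (nat * R)) : nat -> R :=
  match F with
  | [] => phi
  | (_, sigma) :: rest => final U Uinv Rr N eps (evolve U Uinv Rr N eps phi sigma) rest
  end.

Definition admissible (U Uinv Rr : R -> R) (N : nat) (eps : R) (F : list (nat * R)) : Prop :=
  exists phi, realizes U Uinv Rr N eps phi F.

Definition trigger_invariant (U Uinv Rr : R -> R) (N : nat) (eps : R)
  (F : list (nat * R)) : Prop :=
  forall phi, realizes U Uinv Rr N eps phi F ->
    forall i, (i < N)%nat -> phi i = 1 -> final U Uinv Rr N eps phi F i = 1.

Fixpoint Mrest (U Uinv : R -> R) (eps : R) (F : list (nat * R)) (x : R) : R :=
  match F with
  | [] => x
  | (a, sigma) :: rest => Mrest U Uinv eps rest (Hmap U Uinv (INR a * eps) x + sigma)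
  end.

Definition MF (U Uinv Rr : R -> R) (eps : R) (F : list (nat * R)) (x : R) : R :=
  match F with
  | [] => x
  | (a1, sigma1) :: rest => Mrest U Uinv eps rest (Jmap U Uinv Rr (INR (a1 - 1) * eps) x + sigma1)
  end.

Definition invariant_under_return (U Uinv Rr : R -> R) (N : nat) (eps : R) (a1 : nat) : Prop :=
  forall F : list (nat * R),
    admissible U Uinv Rr N eps F -> trigger_invariant U Uinv Rr N eps F ->
    (exists sigma1 rest, F = (a1, sigma1) :: rest) ->
    forall a : nat, (1 <= a <= a1 - 1)%nat ->
      Uinv (1 - INR a * eps) <= MF U Uinv Rr eps F (Uinv (1 - INR a * eps)).

Definition condA (U Uinv Rr : R -> R) (N : nat) (eps : R) (a1 a : nat) : Prop :=
  Uinv (Rr (INR (a1 - 1) * eps)) - Uinv (Rr (INR (a1 - 1) * eps - INR a * eps))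
  <= Uinv (1 - INR (N - a1) * eps) - Uinv (1 - INR (N - a1) * eps - INR a * eps).

Definition condB (U Uinv Rr : R -> R) (N : nat) (eps : R) (a1 a : nat) : Prop :=
  Uinv (Rr (INR (a1 - 1) * eps) + INR (N - a1) * eps)
  - Uinv (Rr (INR (a1 - 1) * eps - INR a * eps) + INR (N - a1) * eps)
  <= 1 - Uinv (1 - INR a * eps).

(* Main.v *)
Require Import Defs.
From Stdlib Require Import Reals Lra Lia List Bool Classical ClassicalEpsilon.
Import ListNotations.
Open Scope R_scope.

Lemma mono_from_der : forall (f : R -> R) (P : R -> Prop) a b,
  a <= b ->
  (forall c, a <= c <= b -> exists l, derivable_pt_lim f c l /\ P l) ->
  (forall l, P l -> 0 <= l) -> f a <= f b.
Proof.
  intros f P a b Hab Hd HP.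
  destruct Hab as [Hab|Hab]; [|subst; lra].
  set (f' := fun c => epsilon (inhabits 0) (fun l => derivable_pt_lim f c l /\ P l)).
  destruct (MVT_cor2 f f' a b Hab) as [c [Hc Hc2]].
  { intros c Hc. unfold f'. apply (epsilon_spec (inhabits 0) (fun l => derivable_pt_lim f c l /\ P l)).
    apply Hd; auto. }
  assert (0 <= f' c).
  { apply HP. unfold f'. apply (epsilon_spec (inhabits 0) (fun l => derivable_pt_lim f c l /\ P l)).
    apply Hd; lra. }
  assert (0 <= f' c * (b - a)) by (apply Rmult_le_pos; lra). lra.
Qed.

Lemma icpd_mono : forall U Uinv, icpd U Uinv ->
  forall e d x y, 0 <= e <= 1 -> 0 <= d -> 0 <= x <= y -> y <= 1 -> y + d <= Uinv (1 - e) ->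
  DeltaH U Uinv x d e <= DeltaH U Uinv y d e.
Proof.
  intros U Uinv Hi e d x y He Hd Hxy Hy1 Hyd.
  apply (mono_from_der (fun p => DeltaH U Uinv p d e) (fun l => 0 <= l)); try lra; auto.
  intros c Hc. apply Hi. unfold inD. repeat split; lra.
Qed.

Lemma dcpd_mono : forall U Uinv, dcpd U Uinv ->
  forall e d x y, 0 <= e <= 1 -> 0 <= d -> 0 <= x <= y -> y <= 1 -> y + d <= Uinv (1 - e) ->
  DeltaH U Uinv y d e <= DeltaH U Uinv x d e.
Proof.
  intros U Uinv Hi e d x y He Hd Hxy Hy1 Hyd.
  assert (H := mono_from_der (fun p => - DeltaH U Uinv p d e) (fun l => 0 <= l) x y).
  simpl in H. cut (- DeltaH U Uinv x d e <= - DeltaH U Uinv y d e). lra.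
  apply H; try lra; auto.
  intros c Hc. destruct (Hi e c d) as [l [Hl Hl0]]. unfold inD. repeat split; lra.
  exists (- l). split. apply derivable_pt_lim_opp. exact Hl. lra.
Qed.

Section Basic.
Variables U Uinv : R -> R.
Hypothesis HU : rise_function U Uinv.

Lemma U_der : forall x, exists l, derivable_pt_lim U x l /\ 0 < l.
Proof.
  destruct HU as [[D [HD0 HD]] [Hpos _]].
  intro x. exists (D 1%nat x). assert (H := HD 0%nat x). rewrite HD0 in H.
  split; auto. eapply Hpos; eauto.
Qed.

Lemma U_cont : forall x, continuity_pt U x.
Proof.
  intro x. destruct (U_der x) as [l [Hl _]].
  apply derivable_continuous_pt. exists l. exact Hl.
Qed.

Lemma U_lt : forall x y, x < y -> U x < U y.
Proof.
  intros x y Hxy.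
  destruct HU as [[D [HD0 HD]] [Hpos _]].
  destruct (MVT_cor2 U (D 1%nat) x y Hxy) as [c [Hc _]].
  { intros c _. assert (H := HD 0%nat c). rewrite HD0 in H. exact H. }
  assert (0 < D 1%nat c).
  { eapply Hpos. assert (H := HD 0%nat c). rewrite HD0 in H. exact H. }
  assert (0 < D 1%nat c * (y - x)) by (apply Rmult_lt_0_compat; lra). lra.
Qed.

Lemma U_le : forall x y, x <= y -> U x <= U y.
Proof. intros x y [H|H]. left; apply U_lt; auto. subst; lra. Qed.

Lemma U_le_inv : forall x y, U x <= U y -> x <= y.
Proof. intros x y H. destruct (Rle_lt_dec x y); auto. apply U_lt in r. lra. Qed.

Lemma U_lt_inv : forall x y, U x < U y -> x < y.
Proof. intros x y H. destruct (Rlt_le_dec x y); auto. apply U_le in r. lra. Qed.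

Lemma U0 : U 0 = 0.
Proof. destruct HU as [_ [_ [H _]]]; auto. Qed.
Lemma U1 : U 1 = 1.
Proof. destruct HU as [_ [_ [_ [H _]]]]; auto. Qed.
Lemma UinvU : forall x, Uinv (U x) = x.
Proof. destruct HU as [_ [_ [_ [_ H]]]]; auto. Qed.

Lemma U_surj : forall v, 0 <= v <= 1 -> exists t, 0 <= t <= 1 /\ U t = v.
Proof.
  intros v Hv.
  destruct (Req_dec v 0) as [->|H0]. { exists 0. split. lra. apply U0. }
  destruct (Req_dec v 1) as [->|H1]. { exists 1. split. lra. apply U1. }
  destruct (IVT (fun t => U t - v) 0 1) as [z [Hz1 Hz2]].
  - apply continuity_minus. intro; apply U_cont. apply continuity_const. intros ? ?; auto.
  - lra.
  - rewrite U0; lra.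
  - rewrite U1; lra.
  - exists z. split; auto. lra.
Qed.

Lemma UUinv : forall v, 0 <= v <= 1 -> U (Uinv v) = v.
Proof. intros v Hv. destruct (U_surj v Hv) as [t [_ <-]]. rewrite UinvU; auto. Qed.

Lemma Uinv_range : forall v, 0 <= v <= 1 -> 0 <= Uinv v <= 1.
Proof. intros v Hv. destruct (U_surj v Hv) as [t [Ht <-]]. rewrite UinvU; auto. Qed.

Lemma Uinv_le : forall u v, 0 <= u -> u <= v -> v <= 1 -> Uinv u <= Uinv v.
Proof. intros u v H1 H2 H3. apply U_le_inv. rewrite !UUinv; lra. Qed.

Lemma Uinv_lt : forall u v, 0 <= u -> u < v -> v <= 1 -> Uinv u < Uinv v.
Proof. intros u v H1 H2 H3. apply U_lt_inv. rewrite !UUinv; lra. Qed.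

Lemma Uinv_lt_w : forall v w, 0 <= v <= 1 -> v < U w -> Uinv v < w.
Proof. intros v w Hv H. apply U_lt_inv. rewrite UUinv; auto. Qed.

Lemma U_nonneg : forall x, 0 <= x -> 0 <= U x.
Proof. intros. rewrite <- U0. apply U_le; auto. Qed.
Lemma U_le1 : forall x, x <= 1 -> U x <= 1.
Proof. intros. rewrite <- U1. apply U_le; auto. Qed.


Lemma U_Hmap : forall e y, 0 <= y -> 0 <= e -> U y + e <= 1 -> U (Hmap U Uinv e y) = U y + e.
Proof. intros. unfold Hmap. apply UUinv. split; auto. assert (0 <= U y) by (apply U_nonneg; auto). lra. Qed.

Lemma Hmap_ge0 : forall e y, 0 <= y -> 0 <= e -> U y + e <= 1 -> 0 <= Hmap U Uinv e y.
Proof. intros. apply U_le_inv. rewrite U0, U_Hmap; auto. assert (0 <= U y) by (apply U_nonneg; auto). lra. Qed.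

Lemma Hmap_le1 : forall e y, 0 <= y -> 0 <= e -> U y + e <= 1 -> Hmap U Uinv e y <= 1.
Proof. intros. apply U_le_inv. rewrite U1, U_Hmap; auto. Qed.

Lemma Hmap_mono : forall e a b, 0 <= a <= b -> 0 <= e -> U b + e <= 1 -> Hmap U Uinv e a <= Hmap U Uinv e b.
Proof.
  intros. apply U_le_inv. assert (U a <= U b) by (apply U_le; lra).
  rewrite !U_Hmap; lra.
Qed.

Lemma Hmap_strict : forall e a b, 0 <= a -> a < b -> 0 <= e -> U b + e <= 1 -> Hmap U Uinv e a < Hmap U Uinv e b.
Proof.
  intros. apply U_lt_inv. assert (U a < U b) by (apply U_lt; lra).
  rewrite !U_Hmap; lra.
Qed.

Lemma Hmap_strict_inv : forall e a b, 0 <= a -> 0 <= b -> 0 <= e -> U b + e <= 1 -> U a + e <= 1 ->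
   Hmap U Uinv e a < Hmap U Uinv e b -> a < b.
Proof.
  intros. apply U_lt_inv. apply U_lt in H4. rewrite !U_Hmap in H4; auto. lra.
Qed.

Lemma Hmap_comp : forall e e' y, 0 <= y -> 0 <= e -> 0 <= e' -> U y + e + e' <= 1 ->
  Hmap U Uinv e' (Hmap U Uinv e y) = Hmap U Uinv (e + e') y.
Proof.
  intros. unfold Hmap at 1. rewrite U_Hmap; auto; try lra. unfold Hmap. f_equal. ring.
Qed.

Lemma Hmap0 : forall y, Hmap U Uinv 0 y = y.
Proof. intros. unfold Hmap. rewrite Rplus_0_r. apply UinvU. Qed.

Variable eps : R.
Hypothesis Heps : 0 < eps.

Inductive TrigPath : R -> list (nat * R) -> Prop :=
| TP_nil : TrigPath 1 []
| TP_cons : forall p a s L, 0 <= s -> 0 <= p -> U p + INR a * eps < 1 ->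
    TrigPath (Hmap U Uinv (INR a * eps) p + s) L -> TrigPath p ((a, s) :: L).

Fixpoint sumk (L : list (nat * R)) : R :=
  match L with [] => 0 | (a, _) :: L' => INR a * eps + sumk L' end.

Fixpoint suma (L : list (nat * R)) : nat :=
  match L with [] => 0%nat | (a, _) :: L' => (a + suma L')%nat end.

Lemma sumk_suma : forall L, sumk L = INR (suma L) * eps.
Proof. induction L as [|[a s] L IH]; simpl. lra. rewrite plus_INR, IH. ring. Qed.

Lemma sumk_ge0 : forall L, 0 <= sumk L.
Proof. intro L. rewrite sumk_suma. apply Rmult_le_pos. apply pos_INR. lra. Qed.

Lemma N1 : forall p L, TrigPath p L -> 0 <= p /\ U p + sumk L <= 1 /\ Mrest U Uinv eps L p = 1.
Proof.
  intros p L H. induction H as [|p a s L Hs Hp Ha HT IH]; simpl.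
  - rewrite U1. lra.
  - destruct IH as [IH1 [IH2 IH3]]. split; auto. split; auto.
    assert (0 <= INR a * eps) by (apply Rmult_le_pos; [apply pos_INR|lra]).
    assert (U (Hmap U Uinv (INR a * eps) p) <= U (Hmap U Uinv (INR a * eps) p + s)) by (apply U_le; lra).
    rewrite U_Hmap in H0; auto; lra.
Qed.

Lemma TP_le_r : forall p L, TrigPath p L -> p <= Uinv (1 - sumk L) /\ 0 <= 1 - sumk L <= 1.
Proof.
  intros p L H. destruct (N1 p L H) as [H1 [H2 _]].
  assert (0 <= U p) by (apply U_nonneg; auto). assert (0 <= sumk L) by apply sumk_ge0.
  split; [|lra]. apply U_le_inv. rewrite UUinv; lra.
Qed.

Lemma N_icpd : icpd U Uinv -> forall p L, TrigPath p L -> forall q, 0 <= q <= p ->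
  Hmap U Uinv (sumk L) (Uinv (1 - sumk L) - (p - q)) <= Mrest U Uinv eps L q.
Proof.
  intros Hi p L H. induction H as [|p a s L Hs Hp Ha HT IH]; intros q Hq; simpl.
  - unfold Rminus at 1. rewrite Rminus_0_r, <- U1, UinvU, U1. rewrite Hmap0. lra.
  - set (e := INR a * eps). fold e in Ha, HT, IH.
    assert (He : 0 <= e) by (apply Rmult_le_pos; [apply pos_INR|lra]).
    assert (Hk' := sumk_ge0 L).
    destruct (N1 _ _ (TP_cons p a s L Hs Hp Ha HT)) as [_ [HN _]]. simpl in HN. fold e in HN.
    destruct (TP_le_r _ _ (TP_cons p a s L Hs Hp Ha HT)) as [Hpr Hr01]. simpl in Hpr, Hr01. fold e in Hpr, Hr01.
    set (r := Uinv (1 - (e + sumk L))) in *.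
    assert (HUr : U r = 1 - (e + sumk L)) by (unfold r; apply UUinv; lra).
    set (y := r - (p - q)).
    assert (Hy0 : q <= y) by (unfold y; lra).
    assert (HUq : 0 <= U q) by (apply U_nonneg; lra).
    assert (HUqp : U q <= U p) by (apply U_le; lra).
    assert (HUy : U y <= U r) by (apply U_le; unfold y; lra).
    assert (HUy0 : 0 <= U y) by (apply U_nonneg; lra).
    assert (Hr1 : r <= 1) by (apply U_le_inv; rewrite HUr, U1; lra).
    rewrite <- (Hmap_comp e (sumk L) y); try lra.
    eapply Rle_trans; [|apply IH].
    2:{ split. apply Rplus_le_le_0_compat; [apply Hmap_ge0; lra|lra].
        apply Rplus_le_compat_r. apply Hmap_mono; lra. }
    apply Hmap_mono; auto.
    + split. apply Hmap_ge0; lra.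
      assert (Hrr : Hmap U Uinv e r = Uinv (1 - sumk L)).
      { unfold Hmap. rewrite HUr. f_equal. ring. }
      assert (Hic := icpd_mono U Uinv Hi e (p - q) q y).
      unfold DeltaH in Hic.
      replace (q + (p - q)) with p in Hic by ring.
      replace (y + (p - q)) with r in Hic by (unfold y; ring).
      rewrite Hrr in Hic.
      assert (Hic' : Hmap U Uinv e p - Hmap U Uinv e q <= Uinv (1 - sumk L) - Hmap U Uinv e y).
      { assert (y <= r) by (unfold y; lra).
        apply Hic; try lra.
        unfold r. apply Uinv_le; lra. }
      lra.
    + destruct (TP_le_r _ _ HT) as [H1 H2].
      assert (Hpp : Hmap U Uinv e q <= Hmap U Uinv e p) by (apply Hmap_mono; lra).
      assert (0 <= Hmap U Uinv e q) by (apply Hmap_ge0; lra).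
      assert (Uinv (1 - sumk L) - (Hmap U Uinv e p + s - (Hmap U Uinv e q + s)) <= Uinv (1 - sumk L)) by lra.
      assert (U (Uinv (1 - sumk L) - (Hmap U Uinv e p + s - (Hmap U Uinv e q + s))) <= U (Uinv (1 - sumk L))) by (apply U_le; auto).
      rewrite UUinv in H3; lra.
Qed.

Lemma N_dcpd : dcpd U Uinv -> forall p L, TrigPath p L -> forall q, 0 <= q <= p ->
  Hmap U Uinv (sumk L) q - Hmap U Uinv (sumk L) p + 1 <= Mrest U Uinv eps L q.
Proof.
  intros Hi p L H. induction H as [|p a s L Hs Hp Ha HT IH]; intros q Hq; simpl.
  - rewrite !Hmap0. lra.
  - set (e := INR a * eps). fold e in Ha, HT, IH.
    assert (He : 0 <= e) by (apply Rmult_le_pos; [apply pos_INR|lra]).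
    assert (Hk' := sumk_ge0 L).
    destruct (N1 _ _ (TP_cons p a s L Hs Hp Ha HT)) as [_ [HN _]]. simpl in HN. fold e in HN.
    destruct (N1 _ _ HT) as [Hp'0 [HN' _]].
    destruct (TP_le_r _ _ HT) as [Hpr' Hr01'].
    assert (HUq : 0 <= U q) by (apply U_nonneg; lra).
    assert (HUqp : U q <= U p) by (apply U_le; lra).
    assert (Hpp : Hmap U Uinv e q <= Hmap U Uinv e p) by (apply Hmap_mono; lra).
    assert (Hq0 : 0 <= Hmap U Uinv e q) by (apply Hmap_ge0; lra).
    assert (IH' := IH (Hmap U Uinv e q + s) ltac:(split; lra)).
    rewrite <- (Hmap_comp e (sumk L) q); try lra.
    rewrite <- (Hmap_comp e (sumk L) p); try lra.
    assert (Hd := dcpd_mono U Uinv Hi (sumk L) (Hmap U Uinv e p - Hmap U Uinv e q)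
                    (Hmap U Uinv e q) (Hmap U Uinv e q + s)).
    unfold DeltaH in Hd.
    replace (Hmap U Uinv e q + s + (Hmap U Uinv e p - Hmap U Uinv e q)) with (Hmap U Uinv e p + s) in Hd by ring.
    replace (Hmap U Uinv e q + (Hmap U Uinv e p - Hmap U Uinv e q)) with (Hmap U Uinv e p) in Hd by ring.
    assert (Hr1 : Uinv (1 - sumk L) <= 1) by (apply Uinv_range; lra).
    assert (Hd' : Hmap U Uinv (sumk L) (Hmap U Uinv e p + s) - Hmap U Uinv (sumk L) (Hmap U Uinv e q + s)
        <= Hmap U Uinv (sumk L) (Hmap U Uinv e p) - Hmap U Uinv (sumk L) (Hmap U Uinv e q)).
    { assert (0 <= U (Hmap U Uinv e p + s)) by (apply U_nonneg; lra). apply Hd; try lra. }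
    idtac.
    lra.
Qed.

End Basic.

Lemma cardl_mono : forall (S S' : nat -> bool) l,
  (forall i, In i l -> S i = true -> S' i = true) -> (length (filter S l) <= length (filter S' l))%nat.
Proof.
  intros S S' l; induction l as [|x l IH]; intros H; simpl; auto.
  assert (IH' : (length (filter S l) <= length (filter S' l))%nat) by (apply IH; intros; apply H; simpl; auto).
  destruct (S x) eqn:E1.
  - rewrite (H x (or_introl eq_refl) E1). simpl. lia.
  - destruct (S' x); simpl; lia.
Qed.

Lemma cardl_strict : forall (S S' : nat -> bool) l i,
  (forall j, In j l -> S j = true -> S' j = true) -> In i l -> S i = false -> S' i = true ->
  (length (filter S l) < length (filter S' l))%nat.
Proof.
  intros S S' l; induction l as [|x l IH]; intros i H Hi HS HS'; simpl in *; [contradiction|].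
  assert (Hm : (length (filter S l) <= length (filter S' l))%nat) by (apply cardl_mono; intros; apply H; auto).
  destruct Hi as [->|Hi].
  - rewrite HS, HS'. simpl. lia.
  - assert (IH' := IH i (fun j Hj => H j (or_intror Hj)) Hi HS HS').
    destruct (S x) eqn:E1.
    + rewrite (H x (or_introl eq_refl) E1). simpl. lia.
    + destruct (S' x); simpl; lia.
Qed.

Lemma cardl_ext : forall (S S' : nat -> bool) l,
  (forall i, In i l -> S i = S' i) -> length (filter S l) = length (filter S' l).
Proof.
  intros S S' l; induction l as [|x l IH]; intros H; simpl; auto.
  rewrite (H x (or_introl eq_refl)). assert (IH' := IH (fun i Hi => H i (or_intror Hi))).
  destruct (S' x); simpl; auto.
Qed.

Lemma cardl_le : forall (S : nat -> bool) l, (length (filter S l) <= length l)%nat.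
Proof. intros S l; induction l as [|x l IH]; simpl; auto. destruct (S x); simpl; lia. Qed.

Lemma cardl_full : forall (S : nat -> bool) l, (length l <= length (filter S l))%nat ->
  forall i, In i l -> S i = true.
Proof.
  intros S l; induction l as [|x l IH]; intros H i Hi; simpl in *; [contradiction|].
  assert (Hle := cardl_le S l).
  destruct (S x) eqn:E; simpl in H.
  - destruct Hi as [->|Hi]; auto. apply IH; auto. lia.
  - lia.
Qed.

Lemma cardl_diff : forall (P F : nat -> bool) l,
  (forall i, In i l -> F i = true -> P i = true) ->
  (length (filter (fun i => P i && negb (F i)) l) + length (filter F l) = length (filter P l))%nat.
Proof.
  intros P F l; induction l as [|x l IH]; intros H; simpl; auto.
  assert (IH' := IH (fun i Hi => H i (or_intror Hi))).
  destruct (F x) eqn:EF.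
  - rewrite (H x (or_introl eq_refl) EF). simpl. lia.
  - destruct (P x); simpl; lia.
Qed.

Lemma cardl_zero : forall (S : nat -> bool) l, (forall i, In i l -> S i = false) -> length (filter S l) = 0%nat.
Proof.
  intros S l; induction l as [|x l IH]; intros H; simpl; auto.
  rewrite (H x (or_introl eq_refl)). apply IH. intros; apply H; simpl; auto.
Qed.

Lemma in_seq0 : forall N i, In i (seq 0 N) <-> (i < N)%nat.
Proof. intros. rewrite in_seq. lia. Qed.

Lemma card_mono : forall N S S', (forall i, (i < N)%nat -> S i = true -> S' i = true) -> (card N S <= card N S')%nat.
Proof. intros. apply cardl_mono. intros i Hi. apply H. apply in_seq0; auto. Qed.

Lemma card_strict : forall N S S' i, (forall j, (j < N)%nat -> S j = true -> S' j = true) ->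
  (i < N)%nat -> S i = false -> S' i = true -> (card N S < card N S')%nat.
Proof. intros. eapply cardl_strict; eauto. intros j Hj. apply H. apply in_seq0; auto. apply in_seq0; auto. Qed.

Lemma card_ext : forall N S S', (forall i, (i < N)%nat -> S i = S' i) -> card N S = card N S'.
Proof. intros. apply cardl_ext. intros i Hi. apply H. apply in_seq0; auto. Qed.

Lemma card_le : forall N S, (card N S <= N)%nat.
Proof. intros. unfold card. rewrite <- (length_seq N 0) at 2. apply cardl_le. Qed.

Lemma card_full : forall N S, (N <= card N S)%nat -> forall i, (i < N)%nat -> S i = true.
Proof. intros N S H i Hi. apply (cardl_full S (seq 0 N)). rewrite length_seq. auto. apply in_seq0; auto. Qed.

Lemma card_diff : forall N P F, (forall i, (i < N)%nat -> F i = true -> P i = true) ->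
  (card N (fun i => P i && negb (F i)) + card N F = card N P)%nat.
Proof. intros. apply cardl_diff. intros i Hi. apply H. apply in_seq0; auto. Qed.

Lemma card_zero : forall N S, (forall i, (i < N)%nat -> S i = false) -> card N S = 0%nat.
Proof. intros. apply cardl_zero. intros i Hi. apply H. apply in_seq0; auto. Qed.

Lemma card_true : forall N, card N (fun _ => true) = N.
Proof. intros. unfold card. rewrite filter_true. apply length_seq. Qed.

Lemma card_pos : forall N S i, (i < N)%nat -> S i = true -> (1 <= card N S)%nat.
Proof.
  intros. assert (card N (fun _ => false) = 0%nat) by (apply card_zero; auto).
  assert (card N (fun _ => false) < card N S)%nat by (eapply card_strict; eauto; discriminate). lia.
Qed.

Lemma card_ltb : forall a N, (a <= N)%nat -> card N (fun i => Nat.ltb i a) = a.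
Proof.
  intros a N. induction N as [|N IH]; intros H.
  - assert (a = 0%nat) by lia. subst. reflexivity.
  - destruct (Nat.eq_dec a (S N)) as [->|Hne].
    + rewrite (card_ext _ _ (fun _ => true)). apply card_true. intros i Hi. apply Nat.ltb_lt. auto.
    + unfold card in *. rewrite seq_S, filter_app, length_app. rewrite IH by lia. simpl.
      replace (Nat.ltb N a) with false. simpl. lia. symmetry. apply Nat.ltb_ge. lia.
Qed.

Lemma card_geb : forall a N, (a <= N)%nat -> card N (fun i => negb (Nat.ltb i a)) = (N - a)%nat.
Proof.
  intros a N H. assert (Hd := card_diff N (fun _ => true) (fun i => Nat.ltb i a) (fun _ _ _ => eq_refl)).
  rewrite card_true, card_ltb in Hd by auto. simpl in Hd. lia.
Qed.

Lemma foldmax_ge_init : forall (f : nat -> R) x0 l, x0 <= fold_right Rmax x0 (map f l).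
Proof. intros f x0 l; induction l; simpl. lra. eapply Rle_trans; [apply IHl|apply Rmax_r]. Qed.

Lemma foldmax_ge : forall (f : nat -> R) x0 l i, In i l -> f i <= fold_right Rmax x0 (map f l).
Proof.
  intros f x0 l; induction l; intros i Hi; simpl in *; [contradiction|].
  destruct Hi as [->|Hi]. apply Rmax_l. eapply Rle_trans; [apply IHl; auto|apply Rmax_r].
Qed.

Lemma foldmax_le : forall (f : nat -> R) x0 l M, x0 <= M -> (forall i, In i l -> f i <= M) ->
  fold_right Rmax x0 (map f l) <= M.
Proof.
  intros f x0 l; induction l; intros M H0 H; simpl; auto.
  apply Rmax_lub. apply H; simpl; auto. apply IHl; auto. intros; apply H; simpl; auto.
Qed.

Lemma maxphase_ge : forall N f i, (i < N)%nat -> f i <= maxphase N f.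
Proof. intros. apply foldmax_ge. apply in_seq0; auto. Qed.

Lemma maxphase_le : forall N f M, (0 < N)%nat -> (forall i, (i < N)%nat -> f i <= M) -> maxphase N f <= M.
Proof. intros. apply foldmax_le. apply H0; auto. intros i Hi; apply H0. apply in_seq0; auto. Qed.

Lemma maxphase_eq : forall N f M i, (i < N)%nat -> f i = M -> (forall i, (i < N)%nat -> f i <= M) -> maxphase N f = M.
Proof.
  intros. apply Rle_antisym. apply maxphase_le; auto. lia. rewrite <- H0. apply maxphase_ge; auto.
Qed.

Section Net.
Variables U Uinv Rr : R -> R.
Variable N : nat.
Variable eps : R.
Hypothesis HU : rise_function U Uinv.
Hypothesis HR : neuronal_reset Rr.
Hypothesis Heps : 0 < eps.
Hypothesis HN1 : INR (N - 1) * eps < 1.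

Definition iterS phi n := Nat.iter n (fire_step U N eps phi) (at_one phi).

Lemma fire_step_incl : forall phi S i, S i = true -> fire_step U N eps phi S i = true.
Proof. intros. unfold fire_step. rewrite H. auto. Qed.

Lemma fire_step_ext : forall phi S S', (forall i, (i < N)%nat -> S i = S' i) ->
  forall i, (i < N)%nat -> fire_step U N eps phi S i = fire_step U N eps phi S' i.
Proof. intros. unfold fire_step. rewrite (card_ext N S S' H). rewrite H; auto. Qed.

Lemma iterS_S : forall phi n, iterS phi (S n) = fire_step U N eps phi (iterS phi n).
Proof. reflexivity. Qed.

Lemma iterS_incl0 : forall phi n i, at_one phi i = true -> iterS phi n i = true.
Proof.
  intros phi n i H. induction n. simpl. auto. rewrite iterS_S. apply fire_step_incl; auto.
Qed.

Lemma fireset_at_one : forall phi i, at_one phi i = true -> fireset U N eps phi i = true.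
Proof. intros. apply (iterS_incl0 phi N i H). Qed.

Lemma at_one_eq : forall phi i, at_one phi i = true -> phi i = 1.
Proof. intros phi i. unfold at_one. destruct (Req_EM_T (phi i) 1); auto; discriminate. Qed.

Lemma at_one_true : forall phi i, phi i = 1 -> at_one phi i = true.
Proof. intros phi i H. unfold at_one. destruct (Req_EM_T (phi i) 1); auto; contradiction. Qed.

Lemma at_one_false : forall phi i, phi i <> 1 -> at_one phi i = false.
Proof. intros phi i H. unfold at_one. destruct (Req_EM_T (phi i) 1); auto; contradiction. Qed.

Lemma card_iter_mono : forall phi n, (card N (iterS phi n) <= card N (iterS phi (S n)))%nat.
Proof. intros. apply card_mono. intros. rewrite iterS_S. apply fire_step_incl; auto. Qed.

Lemma F2_iter : forall phi n i, (i < N)%nat -> iterS phi n i = true ->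
  1 <= U (phi i) + INR (card N (iterS phi n) - 1) * eps.
Proof.
  intros phi n. induction n as [|n IH]; intros i Hi H.
  - simpl in H. apply at_one_eq in H. rewrite H, (U1 U Uinv HU).
    assert (0 <= INR (card N (iterS phi 0) - 1) * eps) by (apply Rmult_le_pos; [apply pos_INR|lra]). lra.
  - assert (Hm := card_iter_mono phi n).
    destruct (iterS phi n i) eqn:E.
    + assert (H1 := IH i Hi E).
      assert (INR (card N (iterS phi n) - 1) <= INR (card N (iterS phi (S n)) - 1)) by (apply le_INR; lia).
      assert (INR (card N (iterS phi n) - 1) * eps <= INR (card N (iterS phi (S n)) - 1) * eps)
        by (apply Rmult_le_compat_r; lra). lra.
    + assert (Hs : (card N (iterS phi n) < card N (iterS phi (S n)))%nat).
      { eapply card_strict; eauto. intros. rewrite iterS_S. apply fire_step_incl; auto. }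
      rewrite iterS_S in H. unfold fire_step in H. rewrite E in H. simpl in H.
      destruct (Rle_dec 1 (U (phi i) + INR (card N (iterS phi n)) * eps)) as [Hc|Hc]; [|discriminate].
      assert (INR (card N (iterS phi n)) <= INR (card N (iterS phi (S n)) - 1)) by (apply le_INR; lia).
      assert (INR (card N (iterS phi n)) * eps <= INR (card N (iterS phi (S n)) - 1) * eps)
        by (apply Rmult_le_compat_r; lra). lra.
Qed.

Lemma F2 : forall phi i, (i < N)%nat -> fireset U N eps phi i = true ->
  1 <= U (phi i) + INR (card N (fireset U N eps phi) - 1) * eps.
Proof. intros. apply (F2_iter phi N i); auto. Qed.

Lemma iter_fix_or : forall phi n, (n <= card N (iterS phi n))%nat \/
  (forall i, (i < N)%nat -> fire_step U N eps phi (iterS phi n) i = iterS phi n i).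
Proof.
  intros phi n. induction n as [|n IH].
  - left. lia.
  - assert (Hfix : (forall i, (i < N)%nat -> fire_step U N eps phi (iterS phi n) i = iterS phi n i) ->
       forall i, (i < N)%nat -> fire_step U N eps phi (iterS phi (S n)) i = iterS phi (S n) i).
    { intros Hf i Hi. rewrite iterS_S. rewrite (fire_step_ext phi _ (iterS phi n)); auto. }
    destruct IH as [IH|IH]; [|right; apply Hfix; auto].
    destruct (classic (forall i, (i < N)%nat -> fire_step U N eps phi (iterS phi n) i = iterS phi n i)) as [Hc|Hc].
    + right. apply Hfix; auto.
    + left. apply not_all_ex_not in Hc. destruct Hc as [i Hc].
      apply imply_to_and in Hc. destruct Hc as [Hi Hc].
      assert (HnF : iterS phi n i = false).
      { destruct (iterS phi n i) eqn:E; auto. exfalso. apply Hc. try rewrite E. apply fire_step_incl; exact E. }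
      assert (HnT : iterS phi (S n) i = true).
      { rewrite iterS_S. destruct (fire_step U N eps phi (iterS phi n) i) eqn:E; auto. }
      assert (Hs : (card N (iterS phi n) < card N (iterS phi (S n)))%nat).
      { apply (card_strict N _ _ i); auto.
        intros. rewrite iterS_S. apply fire_step_incl; auto. }
      lia.
Qed.

Lemma fireset_fix : forall phi i, (i < N)%nat ->
  fire_step U N eps phi (fireset U N eps phi) i = fireset U N eps phi i.
Proof.
  intros phi i Hi. destruct (iter_fix_or phi N) as [H|H]; [|apply H; auto].
  assert (Hle := card_le N (iterS phi N)).
  assert (Hall := card_full N (iterS phi N) H).
  change (fireset U N eps phi) with (iterS phi N).
  rewrite (Hall i Hi). apply fire_step_incl. apply Hall; auto.
Qed.

Lemma F3 : forall phi i, (i < N)%nat -> fireset U N eps phi i = false ->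
  U (phi i) + INR (card N (fireset U N eps phi)) * eps < 1.
Proof.
  intros phi i Hi H. assert (Hf := fireset_fix phi i Hi). rewrite H in Hf.
  unfold fire_step in Hf. rewrite H in Hf. simpl in Hf.
  destruct (Rle_dec 1 (U (phi i) + INR (card N (fireset U N eps phi)) * eps)); [discriminate|]. lra.
Qed.

Lemma iter_fixed : forall phi A, (forall i, (i < N)%nat -> at_one phi i = A i) ->
  (forall i, (i < N)%nat -> fire_step U N eps phi A i = A i) ->
  forall n i, (i < N)%nat -> iterS phi n i = A i.
Proof.
  intros phi A H0 Hf n. induction n as [|n IH]; intros i Hi.
  - simpl. auto.
  - rewrite iterS_S. rewrite (fire_step_ext phi _ A IH); auto.
Qed.

Lemma fireset_fixed : forall phi A, (forall i, (i < N)%nat -> at_one phi i = A i) ->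
  (forall i, (i < N)%nat -> fire_step U N eps phi A i = A i) ->
  forall i, (i < N)%nat -> fireset U N eps phi i = A i.
Proof. intros. apply (iter_fixed phi A H H0 N i H1). Qed.


Definition rng (phi : nat -> R) := forall i, (i < N)%nat -> 0 <= phi i <= 1.

Lemma R_nonneg : forall z, 0 <= z -> 0 <= Rr z <= z.
Proof. destruct HR as [_ [_ H]]. auto. Qed.
Lemma R_mono : forall x y, x <= y -> Rr x <= Rr y.
Proof. destruct HR as [H _]. auto. Qed.

Lemma Uinv1 : Uinv 1 = 1.
Proof. rewrite <- (U1 U Uinv HU) at 1. apply (UinvU U Uinv HU). Qed.

Lemma kle : forall S, INR (card N S - 1) * eps <= INR (N - 1) * eps.
Proof.
  intros. apply Rmult_le_compat_r. lra. apply le_INR. assert (H := card_le N S). lia.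
Qed.

Lemma kle0 : forall n, 0 <= INR n * eps.
Proof. intros. apply Rmult_le_pos. apply pos_INR. lra. Qed.

Lemma fired_z : forall phi i, rng phi -> (i < N)%nat -> fireset U N eps phi i = true ->
  0 <= U (phi i) + INR (card N (fireset U N eps phi) - 1) * eps - 1 <=
       INR (card N (fireset U N eps phi) - 1) * eps.
Proof.
  intros phi i Hr Hi Hf. assert (H := F2 phi i Hi Hf).
  assert (U (phi i) <= 1) by (apply (U_le1 U Uinv HU); apply Hr; auto). lra.
Qed.

Lemma post_range : forall phi, rng phi -> forall i, (i < N)%nat ->
  0 <= post U Uinv Rr N eps phi i < 1.
Proof.
  intros phi Hr i Hi. unfold post.
  destruct (fireset U N eps phi i) eqn:E.
  - assert (Hz := fired_z phi i Hr Hi E). assert (Hk := kle (fireset U N eps phi)).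
    set (z := U (phi i) + INR (card N (fireset U N eps phi) - 1) * eps - 1) in *.
    assert (HRz := R_nonneg z ltac:(lra)).
    unfold Jmap. fold z. split.
    + apply (Uinv_range U Uinv HU). lra.
    + rewrite <- Uinv1. apply (Uinv_lt U Uinv HU); lra.
  - assert (H3 := F3 phi i Hi E).
    assert (0 <= U (phi i)) by (apply (U_nonneg U Uinv HU); apply Hr; auto).
    assert (Hk := kle0 (card N (fireset U N eps phi))).
    unfold Hmap. split.
    + apply (Uinv_range U Uinv HU). lra.
    + rewrite <- Uinv1. apply (Uinv_lt U Uinv HU); lra.
Qed.

Lemma gap_range : forall phi, rng phi -> (0 < N)%nat ->
  0 < gap N (post U Uinv Rr N eps phi) /\
  rng (evolve U Uinv Rr N eps phi (gap N (post U Uinv Rr N eps phi))).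
Proof.
  intros phi Hr HN.
  assert (Hp := post_range phi Hr).
  assert (Hm : maxphase N (post U Uinv Rr N eps phi) < 1).
  { destruct (Rle_lt_dec 1 (maxphase N (post U Uinv Rr N eps phi))); auto.
    exfalso.
    unfold maxphase in r.
    assert (forall l, (forall j, In j l -> (j < N)%nat) ->
       fold_right Rmax (post U Uinv Rr N eps phi 0%nat) (map (post U Uinv Rr N eps phi) l) < 1).
    { induction l; intros Hl; simpl. apply Hp; auto.
      apply Rmax_lub_lt. apply Hp. apply Hl; simpl; auto. apply IHl. intros; apply Hl; simpl; auto. }
    assert (H1 := H (seq 0 N) (fun j Hj => proj1 (in_seq0 N j) Hj)). lra. }
  unfold gap. split. lra.
  intros i Hi. unfold evolve. assert (Hpi := Hp i Hi).
  assert (post U Uinv Rr N eps phi i <= maxphase N (post U Uinv Rr N eps phi)) by (apply maxphase_ge; auto).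
  lra.
Qed.

Lemma post_f : forall phi i, fireset U N eps phi i = true ->
  post U Uinv Rr N eps phi i = Jmap U Uinv Rr (INR (card N (fireset U N eps phi) - 1) * eps) (phi i).
Proof. intros. unfold post. simpl. rewrite H. reflexivity. Qed.

Lemma post_nf : forall phi i, fireset U N eps phi i = false ->
  post U Uinv Rr N eps phi i = Hmap U Uinv (INR (card N (fireset U N eps phi)) * eps) (phi i).
Proof. intros. unfold post. simpl. rewrite H. reflexivity. Qed.

Definition Pend (psi : nat -> R) (p : R) : nat -> bool := fun i => if Rlt_dec p (psi i) then true else false.

Definition Inv (T : nat -> bool) (psi : nat -> R) (p : R) : Prop :=
  rng psi /\ (forall i, (i < N)%nat -> T i = true -> psi i = p) /\ (exists t, (t < N)%nat /\ T t = true).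

Lemma claim : forall T L psi p, Inv T psi p -> runs U Uinv Rr N eps T psi L ->
  (forall t, (t < N)%nat -> T t = true -> final U Uinv Rr N eps psi L t = Mrest U Uinv eps L p) /\
  ((exists t, (t < N)%nat /\ T t = true /\ final U Uinv Rr N eps psi L t = 1) ->
     TrigPath U Uinv eps p L /\ suma L = card N (Pend psi p)).
Proof.
  intros T L. induction L as [|[a s] L IH]; intros psi p [Hr [HT [t0 [Ht0 HTt0]]]] Hrun.
  - simpl. split.
    + intros t Ht HTt. apply HT; auto.
    + intros [t [Ht [HTt Hf]]]. rewrite HT in Hf; auto. subst p. split. constructor.
      symmetry. apply card_zero. intros i Hi. unfold Pend. destruct (Rlt_dec 1 (psi i)); auto.
      assert (H := Hr i Hi). lra.
  - destruct Hrun as [Hnf [Hcard [Hs Hrun]]].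
    assert (HN0 : (0 < N)%nat) by lia.
    destruct (gap_range psi Hr HN0) as [Hg Hr'].
    rewrite <- Hs in Hg, Hr'.
    set (S := fireset U N eps psi) in *.
    set (psi' := evolve U Uinv Rr N eps psi s) in *.
    set (p' := Hmap U Uinv (INR a * eps) p + s).
    assert (Hpost_t : forall t, (t < N)%nat -> T t = true -> psi' t = p').
    { intros t Ht HTt. unfold psi', evolve, post. fold S. rewrite (Hnf t Ht HTt). rewrite Hcard.
      rewrite (HT t Ht HTt). reflexivity. }
    assert (HInv' : Inv T psi' p') by (split; auto; split; eauto).
    destruct (IH psi' p' HInv' Hrun) as [IH1 IH2].
    split.
    + intros t Ht HTt. simpl. fold psi'. rewrite IH1; auto.
    + intros [t [Ht [HTt Hf]]]. simpl in Hf. fold psi' in Hf.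
      destruct (IH2 (ex_intro _ t (conj Ht (conj HTt Hf)))) as [IHT IHc].
      assert (Hp0 : 0 <= p) by (rewrite <- (HT t0 Ht0 HTt0); apply Hr; auto).
      assert (HF3 := F3 psi t0 Ht0 (Hnf t0 Ht0 HTt0)). fold S in HF3. rewrite Hcard in HF3.
      rewrite (HT t0 Ht0 HTt0) in HF3.
      split.
      * constructor; auto. lra.
      * simpl. rewrite IHc. rewrite <- Hcard.
        assert (Hsub : forall i, (i < N)%nat -> S i = true -> Pend psi p i = true).
        { intros i Hi HSi. unfold Pend. destruct (Rlt_dec p (psi i)) as [|Hn]; auto. exfalso.
          assert (H2 := F2 psi i Hi HSi). fold S in H2.
          assert (U (psi i) <= U p) by (apply (U_le U Uinv HU); lra).
          assert (INR (card N S - 1) * eps + eps <= INR (card N S) * eps).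
          { assert (H1 := card_pos N S i Hi HSi). rewrite <- (Rmult_1_l eps) at 2. rewrite <- Rmult_plus_distr_r.
            apply Rmult_le_compat_r. lra. rewrite <- S_INR. apply le_INR. lia. }
          assert (HF3' : U p + INR (card N S) * eps < 1) by (rewrite Hcard; exact HF3).
          lra. }
        rewrite <- (card_diff N (Pend psi p) S Hsub), (Nat.add_comm (card N S)). f_equal.
        apply card_ext. intros i Hi.
        unfold Pend. unfold psi' at 1, evolve.
        assert (HUp : 0 <= U p) by (apply (U_nonneg U Uinv HU); auto).
        destruct (S i) eqn:ES.
        --
           rewrite andb_false_r.
           destruct (Rlt_dec p' (post U Uinv Rr N eps psi i + s)) as [Hlt|]; auto. exfalso.
           rewrite (post_f psi i ES) in Hlt. fold S in Hlt.
           assert (Hz := fired_z psi i Hr Hi ES). fold S in Hz.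
           set (z := U (psi i) + INR (card N S - 1) * eps - 1) in *.
           assert (HRz := R_nonneg z ltac:(lra)).
           assert (Hk := kle S).
           unfold Jmap in Hlt. fold z in Hlt. unfold p', Hmap in Hlt.
           assert (INR (card N S - 1) * eps <= INR (card N S) * eps) by (apply Rmult_le_compat_r; [lra|apply le_INR; lia]).
           assert (HH : Uinv (Rr z) <= Uinv (U p + INR a * eps)).
           { apply (Uinv_le U Uinv HU); try lra. rewrite <- Hcard. lra. }
           lra.
        -- rewrite andb_true_r.
           assert (HF3i := F3 psi i Hi ES). fold S in HF3i.
           assert (0 <= psi i) by (apply Hr; auto).
           assert (Hk0 := kle0 (card N S)).
           assert (HF3' : U p + INR (card N S) * eps < 1) by (rewrite Hcard; exact HF3).
           destruct (Rlt_dec p' (post U Uinv Rr N eps psi i + s)) as [H1|H1];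
             rewrite (post_nf psi i ES) in H1; fold S in H1; unfold p' in H1; rewrite <- Hcard in H1;
             destruct (Rlt_dec p (psi i)) as [Hlt|Hle]; auto; exfalso.
           ++ apply Hle.
              apply (Hmap_strict_inv U Uinv HU (INR (card N S) * eps)); try lra.
           ++ apply H1.
              apply Rplus_lt_compat_r. apply (Hmap_strict U Uinv HU); lra.
Qed.

Lemma first_step : forall phi F, realizes U Uinv Rr N eps phi F ->
  exists a1 s rest, F = (a1, s) :: rest /\ a1 = card N (fireset U N eps phi) /\
    Inv (at_one phi) (evolve U Uinv Rr N eps phi s) (Jmap U Uinv Rr (INR (a1 - 1) * eps) 1 + s) /\
    runs U Uinv Rr N eps (at_one phi) (evolve U Uinv Rr N eps phi s) rest /\
    0 < s /\ (1 <= a1)%nat /\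
    card N (Pend (evolve U Uinv Rr N eps phi s) (Jmap U Uinv Rr (INR (a1 - 1) * eps) 1 + s)) = (N - a1)%nat.
Proof.
  intros phi F [[Hr [t0 [Ht0 Hphi0]]] HF].
  destruct F as [|[a1 s] rest]; [contradiction|].
  destruct HF as [Hc [Hs Hrun]].
  exists a1, s, rest. split; auto. split; auto.
  assert (HN0 : (0 < N)%nat) by lia.
  assert (Hr' : rng phi) by exact Hr.
  destruct (gap_range phi Hr' HN0) as [Hg Hr2]. rewrite <- Hs in Hg, Hr2.
  set (S := fireset U N eps phi) in *.
  assert (HS0 : S t0 = true) by (apply fireset_at_one; apply at_one_true; auto).
  assert (Ha1 : (1 <= a1)%nat) by (rewrite <- Hc; exact (card_pos N S t0 Ht0 HS0)).
  assert (Htrig : forall i, (i < N)%nat -> at_one phi i = true ->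
     evolve U Uinv Rr N eps phi s i = Jmap U Uinv Rr (INR (a1 - 1) * eps) 1 + s).
  { intros i Hi Ha. unfold evolve. rewrite (post_f phi i (fireset_at_one phi i Ha)). fold S. rewrite Hc.
    rewrite (at_one_eq phi i Ha). reflexivity. }
  split. { split; auto. split; auto. exists t0. split; auto. apply at_one_true; auto. }
  split; auto. split; auto. split; auto.
  assert (Hk := kle S).
  set (p1 := Jmap U Uinv Rr (INR (a1 - 1) * eps) 1 + s).
  assert (Hp1 : Jmap U Uinv Rr (INR (a1 - 1) * eps) 1 = Uinv (Rr (INR (a1 - 1) * eps))).
  { unfold Jmap. rewrite (U1 U Uinv HU). f_equal. f_equal. ring. }
  assert (Hz1 := R_nonneg (INR (a1 - 1) * eps) (kle0 _)).
  rewrite Hc in Hk.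
  assert (Hd := card_diff N (fun _ => true) S (fun _ _ _ => eq_refl)).
  rewrite card_true in Hd. simpl in Hd.
  rewrite (card_ext N _ (fun i => negb (S i))). fold S in Hc. lia.
  intros i Hi. unfold Pend, p1, evolve. rewrite Hp1.
  destruct (S i) eqn:ES; simpl.
  - destruct (Rlt_dec _ _) as [Hl|]; auto. exfalso.
    rewrite (post_f phi i ES) in Hl. fold S in Hl.
    assert (Hz := fired_z phi i Hr' Hi ES). fold S in Hz. rewrite Hc in Hz.
    unfold Jmap in Hl. rewrite Hc in Hl.
    assert (Rr (U (phi i) + INR (a1 - 1) * eps - 1) <= Rr (INR (a1 - 1) * eps)) by (apply R_mono; lra).
    assert (HRz := R_nonneg (U (phi i) + INR (a1 - 1) * eps - 1) ltac:(lra)).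
    assert (Uinv (Rr (U (phi i) + INR (a1 - 1) * eps - 1)) <= Uinv (Rr (INR (a1 - 1) * eps))).
    { apply (Uinv_le U Uinv HU); lra. }
    lra.
  - assert (HF3i := F3 phi i Hi ES). fold S in HF3i. rewrite Hc in HF3i.
    assert (0 <= U (phi i)) by (apply (U_nonneg U Uinv HU); apply Hr'; auto).
    destruct (Rlt_dec _ _) as [|Hn]; auto. exfalso. apply Hn.
    rewrite (post_nf phi i ES). fold S.
    apply Rplus_lt_compat_r. unfold Hmap. rewrite Hc.
    apply (Uinv_lt U Uinv HU); try lra.
    assert (INR (a1 - 1) * eps < INR a1 * eps) by (apply Rmult_lt_compat_r; [lra|apply lt_INR; lia]).
    lra.
Qed.

Lemma Jmap1 : forall a1, Jmap U Uinv Rr (INR (a1 - 1) * eps) 1 = Uinv (Rr (INR (a1 - 1) * eps)).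
Proof. intros. unfold Jmap. rewrite (U1 U Uinv HU). f_equal. f_equal. ring. Qed.

Lemma trig_final : forall phi F i, realizes U Uinv Rr N eps phi F -> (i < N)%nat -> phi i = 1 ->
  final U Uinv Rr N eps phi F i = MF U Uinv Rr eps F 1.
Proof.
  intros phi F i Hreal Hi Hp.
  destruct (first_step phi F Hreal) as [a1 [s [rest [-> [Ha [HInv [Hrun _]]]]]]].
  destruct (claim _ _ _ _ HInv Hrun) as [C1 _].
  simpl. apply C1; auto. apply at_one_true; auto.
Qed.

Lemma struct_suff : forall F, admissible U Uinv Rr N eps F -> trigger_invariant U Uinv Rr N eps F ->
  forall a1 s1 rest, F = (a1, s1) :: rest ->
  TrigPath U Uinv eps (Uinv (Rr (INR (a1 - 1) * eps))) ((0%nat, s1) :: rest) /\ suma rest = (N - a1)%nat.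
Proof.
  intros F [phi Hreal] Htrig a1 s1 rest HF.
  destruct (first_step phi F Hreal) as [a1' [s [rest' [HF' [Ha [HInv [Hrun [Hs [Ha1 Hcnt]]]]]]]]].
  rewrite HF in HF'. injection HF' as <- <- <-.
  destruct (claim _ _ _ _ HInv Hrun) as [_ C2].
  destruct (proj1 Hreal) as [Hr [t0 [Ht0 Hphi0]]].
  assert (Hf := Htrig phi Hreal t0 Ht0 Hphi0). rewrite HF in Hf. simpl in Hf.
  destruct (C2 (ex_intro _ t0 (conj Ht0 (conj (at_one_true phi t0 Hphi0) Hf)))) as [HT Hc].
  split; [|lia].
  rewrite Jmap1 in HT.
  assert (Hz := R_nonneg (INR (a1 - 1) * eps) (kle0 _)).
  assert (Hk : INR (a1 - 1) * eps <= INR (N - 1) * eps).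
  { apply Rmult_le_compat_r. lra. apply le_INR. assert (H := card_le N (fireset U N eps phi)). lia. }
  constructor; try lra.
  - apply (Uinv_range U Uinv HU). lra.
  - simpl. rewrite Rmult_0_l, Rplus_0_r. rewrite (UUinv U Uinv HU); lra.
  - simpl. rewrite Rmult_0_l, (Hmap0 U Uinv HU). exact HT.
Qed.

Lemma nat_le_R : forall m n, (m <= n)%nat -> INR m * eps <= INR n * eps.
Proof. intros. apply Rmult_le_compat_r. lra. apply le_INR. auto. Qed.

Lemma INR_eps_add : forall m n, INR m * eps + INR n * eps = INR (m + n) * eps.
Proof. intros. rewrite plus_INR. ring. Qed.

Section A1.
Variable a1 : nat.
Hypothesis Ha1 : (2 <= a1 <= N)%nat.

Let c := INR (a1 - 1) * eps.
Let K := INR (N - a1) * eps.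

Lemma cK : c + K <= INR (N - 1) * eps.
Proof. unfold c, K. rewrite INR_eps_add. apply nat_le_R. lia. Qed.

Lemma aK : forall a, (1 <= a <= a1 - 1)%nat -> K + INR a * eps <= INR (N - 1) * eps /\ INR a * eps <= c.
Proof.
  intros a Ha. unfold c, K. rewrite INR_eps_add. split; apply nat_le_R; lia.
Qed.

Lemma basic_vals : forall a, (1 <= a <= a1 - 1)%nat ->
  let p0 := Uinv (Rr c) in let q0 := Uinv (Rr (c - INR a * eps)) in
  0 <= q0 <= p0 /\ U p0 = Rr c /\ U q0 = Rr (c - INR a * eps) /\ Rr c <= c /\ 0 <= Rr (c - INR a * eps)
  /\ 0 <= K /\ 0 <= INR a * eps /\ p0 <= 1 /\
  Jmap U Uinv Rr c (Uinv (1 - INR a * eps)) = q0 /\ U (Uinv (1 - INR a * eps)) = 1 - INR a * eps.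
Proof.
  intros a Ha p0 q0.
  destruct (aK a Ha) as [H1 H2].
  assert (Hc := cK). assert (HK : 0 <= K) by apply kle0. assert (Hae : 0 <= INR a * eps) by apply kle0.
  assert (Hr1 := R_nonneg c ltac:(lra)).
  assert (Hr2 := R_nonneg (c - INR a * eps) ltac:(lra)).
  assert (Hm : Rr (c - INR a * eps) <= Rr c) by (apply R_mono; lra).
  assert (Hux : U (Uinv (1 - INR a * eps)) = 1 - INR a * eps) by (apply (UUinv U Uinv HU); lra).
  repeat split; try lra.
  - apply (Uinv_range U Uinv HU); lra.
  - apply (Uinv_le U Uinv HU); lra.
  - apply (UUinv U Uinv HU); lra.
  - apply (UUinv U Uinv HU); lra.
  - apply (Uinv_range U Uinv HU); lra.
  - unfold Jmap. rewrite Hux. unfold q0. f_equal. f_equal. ring.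
Qed.

Lemma MF_as : forall a s1 rest, (1 <= a <= a1 - 1)%nat ->
  MF U Uinv Rr eps ((a1, s1) :: rest) (Uinv (1 - INR a * eps)) =
  Mrest U Uinv eps ((0%nat, s1) :: rest) (Uinv (Rr (c - INR a * eps))).
Proof.
  intros a s1 rest Ha. destruct (basic_vals a Ha) as [_ [_ [_ [_ [_ [_ [_ [_ [HJ _]]]]]]]]].
  simpl. fold c. rewrite HJ. rewrite Rmult_0_l, (Hmap0 U Uinv HU). reflexivity.
Qed.

Lemma sumk_L0 : forall s1 rest, suma rest = (N - a1)%nat -> sumk eps ((0%nat, s1) :: rest) = K.
Proof. intros. simpl. rewrite sumk_suma, H. unfold K. ring. Qed.

Lemma suff_icpd : icpd U Uinv -> (forall a, (1 <= a <= a1 - 1)%nat -> condA U Uinv Rr N eps a1 a) ->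
  invariant_under_return U Uinv Rr N eps a1.
Proof.
  intros Hi HA F Hadm Htr [s1 [rest HF]] a Ha.
  destruct (struct_suff F Hadm Htr a1 s1 rest HF) as [HT Hsum]. fold c in HT.
  destruct (basic_vals a Ha) as [Hq [HUp [HUq [Hrc [Hrq [HK [Hae [Hp1 [HJ Hux]]]]]]]]].
  destruct (aK a Ha) as [H1 H2]. assert (Hc := cK).
  rewrite HF, MF_as by auto.
  assert (HN := N_icpd U Uinv HU eps Heps Hi _ _ HT _ Hq).
  rewrite sumk_L0 in HN by auto.
  assert (HAa := HA a Ha). unfold condA in HAa. fold c K in HAa.
  set (p0 := Uinv (Rr c)) in *. set (q0 := Uinv (Rr (c - INR a * eps))) in *.
  set (r := Uinv (1 - K)) in *.
  set (y := Uinv (1 - K - INR a * eps)) in *.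
  assert (HUr : U r = 1 - K) by (apply (UUinv U Uinv HU); lra).
  assert (HUy : U y = 1 - K - INR a * eps) by (apply (UUinv U Uinv HU); lra).
  assert (Hy0 : 0 <= y) by (apply (Uinv_range U Uinv HU); lra).
  eapply Rle_trans; [|exact HN].
  replace (Uinv (1 - INR a * eps)) with (Hmap U Uinv K y).
  2:{ unfold Hmap. rewrite HUy. f_equal. ring. }
  apply (Hmap_mono U Uinv HU); try lra.
  assert (U (r - (p0 - q0)) <= U r) by (apply (U_le U Uinv HU); lra). lra.
Qed.

Lemma suff_dcpd : dcpd U Uinv -> (forall a, (1 <= a <= a1 - 1)%nat -> condB U Uinv Rr N eps a1 a) ->
  invariant_under_return U Uinv Rr N eps a1.
Proof.
  intros Hi HB F Hadm Htr [s1 [rest HF]] a Ha.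
  destruct (struct_suff F Hadm Htr a1 s1 rest HF) as [HT Hsum]. fold c in HT.
  destruct (basic_vals a Ha) as [Hq [HUp [HUq [Hrc [Hrq [HK [Hae [Hp1 [HJ Hux]]]]]]]]].
  rewrite HF, MF_as by auto.
  assert (HN := N_dcpd U Uinv HU eps Heps Hi _ _ HT _ Hq).
  rewrite sumk_L0 in HN by auto.
  assert (HBa := HB a Ha). unfold condB in HBa. fold c K in HBa.
  unfold Hmap in HN. rewrite HUp, HUq in HN. lra.
Qed.

Lemma A_from_B : dcpd U Uinv -> forall a, (1 <= a <= a1 - 1)%nat ->
  condB U Uinv Rr N eps a1 a -> condA U Uinv Rr N eps a1 a.
Proof.
  intros Hi a Ha HBa.
  destruct (basic_vals a Ha) as [Hq [HUp [HUq [Hrc [Hrq [HK [Hae [Hp1 [HJ Hux]]]]]]]]].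
  destruct (aK a Ha) as [H1 H2]. assert (Hc := cK).
  unfold condB in HBa; unfold condA. fold c K in HBa |- *.
  set (p0 := Uinv (Rr c)) in *. set (q0 := Uinv (Rr (c - INR a * eps))) in *.
  set (r := Uinv (1 - K)) in *.
  set (y := Uinv (1 - K - INR a * eps)) in *.
  assert (HUr : U r = 1 - K) by (apply (UUinv U Uinv HU); lra).
  assert (HUy : U y = 1 - K - INR a * eps) by (apply (UUinv U Uinv HU); lra).
  assert (Hr1 : r <= 1) by (apply (Uinv_range U Uinv HU); lra).
  assert (Hpr : p0 <= r) by (apply (U_le_inv U Uinv HU); lra).
  assert (Hd := dcpd_mono U Uinv Hi K (p0 - q0) q0 (r - (p0 - q0))).
  unfold DeltaH in Hd. replace (q0 + (p0 - q0)) with p0 in Hd by ring.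
  replace (r - (p0 - q0) + (p0 - q0)) with r in Hd by ring.
  assert (Hd' : Hmap U Uinv K r - Hmap U Uinv K (r - (p0 - q0)) <= Hmap U Uinv K p0 - Hmap U Uinv K q0).
  { apply Hd; try lra. unfold r. lra. }
  assert (HHr : Hmap U Uinv K r = 1) by (unfold Hmap; rewrite HUr; replace (1 - K + K) with 1 by ring; apply Uinv1).
  unfold Hmap at 3 4 in Hd'. rewrite HUp, HUq in Hd'.
  (* so Hmap K (r - (p0-q0)) >= Uinv (1 - a eps) *)
  destruct (Rle_lt_dec y (r - (p0 - q0))) as [Hle|Hlt]; [lra|exfalso].
  assert (Hs : Hmap U Uinv K (r - (p0 - q0)) < Hmap U Uinv K y).
  { apply (Hmap_strict U Uinv HU); try lra. }
  replace (Hmap U Uinv K y) with (Uinv (1 - INR a * eps)) in Hs.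
  2:{ unfold Hmap. rewrite HUy. f_equal. ring. }
  lra.
Qed.

End A1.

Lemma U_cont_eps : forall x0 e, 0 < e -> exists d, 0 < d /\ forall t, Rabs (t - x0) < d -> Rabs (U t - U x0) < e.
Proof.
  intros x0 e He. assert (H := U_cont U Uinv HU x0).
  unfold continuity_pt, continue_in, limit1_in, limit_in in H.
  destruct (H e He) as [d [Hd Hd2]]. exists d. split; auto.
  intros t Ht. destruct (Req_dec t x0) as [->|Hne].
  - rewrite Rminus_diag, Rabs_R0. auto.
  - apply Hd2. split. split; auto. exact I. simpl. unfold R_dist. auto.
Qed.

Section A2.
Variable a1 : nat.
Hypothesis Ha1 : (2 <= a1 <= N)%nat.

Lemma nec_B_N : a1 = N -> invariant_under_return U Uinv Rr N eps a1 ->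
  forall a, (1 <= a <= a1 - 1)%nat -> condB U Uinv Rr N eps a1 a.
Proof.
  intros HaN Hinv a Ha. subst a1.
  destruct (basic_vals N Ha1 a Ha) as [Hq [HUp [HUq [Hrc [Hrq [HK [Hae [Hp1 [HJ Hux]]]]]]]]].
  set (c := INR (N - 1) * eps) in *.
  set (p0 := Uinv (Rr c)) in *. set (q0 := Uinv (Rr (c - INR a * eps))) in *.
  assert (HN0 : (0 < N)%nat) by lia.
  set (phi0 := fun _ : nat => 1).
  set (F := [(N, 1 - p0)]).
  assert (Hfs : forall i, (i < N)%nat -> fireset U N eps phi0 i = true).
  { intros. apply fireset_at_one. apply at_one_true. reflexivity. }
  assert (Hcard : card N (fireset U N eps phi0) = N).
  { rewrite (card_ext N _ (fun _ => true)). apply card_true. intros; apply Hfs; auto. }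
  assert (Hpost : forall i, (i < N)%nat -> post U Uinv Rr N eps phi0 i = p0).
  { intros i Hi. rewrite (post_f phi0 i (Hfs i Hi)). rewrite Hcard. unfold phi0. rewrite Jmap1. reflexivity. }
  assert (Hgap : gap N (post U Uinv Rr N eps phi0) = 1 - p0).
  { unfold gap. rewrite (maxphase_eq N _ p0 0%nat HN0 (Hpost 0%nat HN0)). reflexivity.
    intros i Hi. rewrite Hpost; auto. lra. }
  assert (Hreal : forall phi, realizes U Uinv Rr N eps phi F -> forall i, (i < N)%nat -> phi i = 1 ->
            final U Uinv Rr N eps phi F i = 1).
  { intros phi Hr i Hi Hp. rewrite (trig_final phi F i Hr Hi Hp). unfold F. simpl. rewrite Jmap1. unfold p0, c. ring. }
  assert (Hadm : realizes U Uinv Rr N eps phi0 F).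
  { split.
    - split. intros i Hi. unfold phi0. lra. exists 0%nat. split; auto.
    - simpl. split; auto. split. symmetry; auto.
      exists 0%nat. split; auto. split. apply at_one_true; reflexivity.
      apply fireset_at_one. apply at_one_true. unfold evolve. rewrite Hpost by auto. unfold p0, c. ring. }
  assert (HM := Hinv F (ex_intro _ phi0 Hadm) Hreal (ex_intro _ (1 - p0) (ex_intro _ [] eq_refl)) a Ha).
  unfold F in HM. simpl in HM. fold c in HM. rewrite HJ in HM.
  unfold condB. fold c. rewrite Nat.sub_diag. simpl INR. rewrite Rmult_0_l, !Rplus_0_r.
  fold p0 q0. lra.
Qed.

End A2.

Section A3.
Variable a1 : nat.
Hypothesis Ha1 : (2 <= a1 <= N)%nat.

Lemma nec_B_lt : (a1 < N)%nat -> invariant_under_return U Uinv Rr N eps a1 ->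
  forall a, (1 <= a <= a1 - 1)%nat -> condB U Uinv Rr N eps a1 a.
Proof.
  intros HaN Hinv a Ha.
  destruct (basic_vals a1 Ha1 a Ha) as [Hq [HUp [HUq [Hrc [Hrq [HK [Hae [Hp1 [HJ Hux]]]]]]]]].
  destruct (aK a1 Ha1 a Ha) as [H1 H2]. assert (Hc := cK a1 Ha1).
  set (c := INR (a1 - 1) * eps) in *. set (K := INR (N - a1) * eps) in *.
  set (p0 := Uinv (Rr c)) in *. set (q0 := Uinv (Rr (c - INR a * eps))) in *.
  set (x := Uinv (1 - INR a * eps)) in *.
  unfold condB. fold c K.
  assert (HHp : Uinv (Rr c + K) = Hmap U Uinv K p0) by (unfold Hmap; rewrite HUp; reflexivity).
  assert (HHq : Uinv (Rr (c - INR a * eps) + K) = Hmap U Uinv K q0) by (unfold Hmap; rewrite HUq; reflexivity).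
  rewrite HHp, HHq. fold x.
  destruct (Rle_lt_dec (Hmap U Uinv K p0 - Hmap U Uinv K q0) (1 - x)) as [Hok|Hbad]; auto. exfalso.
  set (eta := Hmap U Uinv K p0 - Hmap U Uinv K q0 - (1 - x)).
  assert (Heta : 0 < eta) by (unfold eta; lra).
  assert (HN1' := HN1).
  assert (HUpK : U p0 + K < 1) by lra.
  assert (HUqK : U q0 + K <= U p0 + K) by (apply Rplus_le_compat_r; apply (U_le U Uinv HU); lra).
  assert (HUq0 : 0 <= U q0) by lra.
  set (w := Hmap U Uinv K q0 + eta).
  assert (HUw : U q0 + K < U w).
  { rewrite <- (U_Hmap U Uinv HU K q0) by lra. apply (U_lt U Uinv HU). unfold w. lra. }
  destruct (U_cont_eps q0 (U w - (U q0 + K)) ltac:(lra)) as [d1 [Hd1 Hd1']].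
  destruct (U_cont_eps p0 (1 - (U p0 + K)) ltac:(lra)) as [d2 [Hd2 Hd2']].
  assert (Ha1e : INR a1 * eps <= INR (N - 1) * eps) by (apply nat_le_R; lia).
  assert (Ha1e0 : 0 <= INR a1 * eps) by apply kle0.
  assert (Hd3 : Uinv (INR a1 * eps) < 1).
  { rewrite <- Uinv1. apply (Uinv_lt U Uinv HU); lra. }
  assert (Hd4 : p0 < 1).
  { unfold p0. rewrite <- Uinv1. apply (Uinv_lt U Uinv HU); lra. }
  set (del := Rmin (Rmin d1 d2) (Rmin (1 - Uinv (INR a1 * eps)) (1 - p0)) / 2).
  assert (Hm1 := Rmin_l (Rmin d1 d2) (Rmin (1 - Uinv (INR a1 * eps)) (1 - p0))).
  assert (Hm2 := Rmin_r (Rmin d1 d2) (Rmin (1 - Uinv (INR a1 * eps)) (1 - p0))).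
  assert (Hm3 := Rmin_l d1 d2). assert (Hm4 := Rmin_r d1 d2).
  assert (Hm5 := Rmin_l (1 - Uinv (INR a1 * eps)) (1 - p0)).
  assert (Hm6 := Rmin_r (1 - Uinv (INR a1 * eps)) (1 - p0)).
  assert (Hmpos : 0 < Rmin (Rmin d1 d2) (Rmin (1 - Uinv (INR a1 * eps)) (1 - p0))).
  { apply Rmin_glb_lt; apply Rmin_glb_lt; lra. }
  assert (Hdel0 : 0 < del) by (unfold del; lra).
  assert (Hdel1 : del < d1) by (unfold del; lra).
  assert (Hdel2 : del < d2) by (unfold del; lra).
  assert (Hdel3 : del < 1 - Uinv (INR a1 * eps)) by (unfold del; lra).
  assert (Hdel4 : del < 1 - p0) by (unfold del; lra).
  clearbody del.
  assert (HUpd : U (p0 + del) + K < 1).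
  { assert (H := Hd2' (p0 + del) ltac:(rewrite Rabs_right; lra)).
    apply Rabs_def2 in H. lra. }
  assert (HUqd : U (q0 + del) < U w - K).
  { assert (H := Hd1' (q0 + del) ltac:(rewrite Rabs_right; lra)).
    apply Rabs_def2 in H. lra. }
  assert (HUpd0 : U p0 <= U (p0 + del)) by (apply (U_le U Uinv HU); lra).
  assert (HUqpd : U (q0 + del) <= U (p0 + del)) by (apply (U_le U Uinv HU); lra).
  assert (HUqd0 : U q0 <= U (q0 + del)) by (apply (U_le U Uinv HU); lra).
  set (s := 1 - del).
  assert (HUs1 : U s < 1) by (rewrite <- (U1 U Uinv HU); apply (U_lt U Uinv HU); unfold s; lra).
  assert (HUsa : INR a1 * eps <= U s).
  { rewrite <- (UUinv U Uinv HU (INR a1 * eps)) by lra. apply (U_le U Uinv HU). unfold s; lra. }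
  set (phio := Uinv (U s - INR a1 * eps)).
  assert (HUo : U phio = U s - INR a1 * eps) by (apply (UUinv U Uinv HU); lra).
  assert (Ho01 : 0 <= phio <= 1) by (apply (Uinv_range U Uinv HU); lra).
  assert (Ho1 : phio <> 1).
  { intro Heq. rewrite Heq, (U1 U Uinv HU) in HUo. lra. }
  set (phi0 := fun i => if Nat.ltb i a1 then 1 else phio).
  assert (HA1 : forall i, (i < N)%nat -> at_one phi0 i = Nat.ltb i a1).
  { intros i Hi. destruct (Nat.ltb i a1) eqn:E.
    - apply at_one_true. unfold phi0. rewrite E. reflexivity.
    - apply at_one_false. unfold phi0. rewrite E. auto. }
  assert (HA2 : forall i, (i < N)%nat -> fire_step U N eps phi0 (fun i => Nat.ltb i a1) i = Nat.ltb i a1).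
  { intros i Hi. destruct (Nat.ltb i a1) eqn:E.
    - apply fire_step_incl. exact E.
    - unfold fire_step. rewrite E. simpl. rewrite card_ltb by lia.
      unfold phi0. rewrite E.
      destruct (Rle_dec 1 (U phio + INR a1 * eps)); auto. lra. }
  assert (Hfs1 := fireset_fixed phi0 (fun i => Nat.ltb i a1) HA1 HA2). simpl in Hfs1.
  assert (Hcard1 : card N (fireset U N eps phi0) = a1).
  { rewrite (card_ext N _ (fun i => Nat.ltb i a1) Hfs1). apply card_ltb. lia. }
  assert (Hpost1 : forall i, (i < N)%nat -> post U Uinv Rr N eps phi0 i = if Nat.ltb i a1 then p0 else s).
  { intros i Hi. destruct (Nat.ltb i a1) eqn:E.
    - rewrite (post_f phi0 i) by (rewrite Hfs1; auto). rewrite Hcard1.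
      unfold phi0. rewrite E. rewrite Jmap1. reflexivity.
    - rewrite (post_nf phi0 i) by (rewrite Hfs1; auto). rewrite Hcard1.
      unfold phi0. rewrite E. unfold Hmap. rewrite HUo. replace (U s - INR a1 * eps + INR a1 * eps) with (U s) by ring.
      apply (UinvU U Uinv HU). }
  assert (Hgap1 : gap N (post U Uinv Rr N eps phi0) = del).
  { unfold gap. rewrite (maxphase_eq N _ s a1 HaN). unfold s; ring.
    rewrite Hpost1 by auto. rewrite Nat.ltb_irrefl. reflexivity.
    intros i Hi. rewrite Hpost1 by auto. destruct (Nat.ltb i a1); unfold s; lra. }
  set (psi1 := evolve U Uinv Rr N eps phi0 del).
  assert (Hpsi1 : forall i, (i < N)%nat -> psi1 i = if Nat.ltb i a1 then p0 + del else 1).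
  { intros i Hi. unfold psi1, evolve. rewrite Hpost1 by auto. destruct (Nat.ltb i a1); unfold s; ring. }
  assert (HB1 : forall i, (i < N)%nat -> at_one psi1 i = negb (Nat.ltb i a1)).
  { intros i Hi. destruct (Nat.ltb i a1) eqn:E; simpl.
    - apply at_one_false. rewrite Hpsi1, E by auto. lra.
    - apply at_one_true. rewrite Hpsi1, E by auto. reflexivity. }
  assert (HB2 : forall i, (i < N)%nat -> fire_step U N eps psi1 (fun i => negb (Nat.ltb i a1)) i = negb (Nat.ltb i a1)).
  { intros i Hi. destruct (Nat.ltb i a1) eqn:E; simpl.
    - unfold fire_step. rewrite E. simpl. rewrite card_geb by lia. fold K.
      rewrite Hpsi1, E by auto.
      destruct (Rle_dec 1 (U (p0 + del) + K)); auto. lra.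
    - apply fire_step_incl. rewrite E. reflexivity. }
  assert (Hfs2 := fireset_fixed psi1 (fun i => negb (Nat.ltb i a1)) HB1 HB2). simpl in Hfs2.
  assert (Hcard2 : card N (fireset U N eps psi1) = (N - a1)%nat).
  { rewrite (card_ext N _ (fun i => negb (Nat.ltb i a1)) Hfs2). apply card_geb. lia. }
  set (P := Hmap U Uinv K (p0 + del)).
  assert (HP : P = Uinv (U (p0 + del) + K)) by reflexivity.
  assert (Hpost2a : forall i, (i < N)%nat -> Nat.ltb i a1 = true -> post U Uinv Rr N eps psi1 i = P).
  { intros i Hi E. rewrite (post_nf psi1 i) by (rewrite Hfs2, E by auto; reflexivity). rewrite Hcard2.
    rewrite Hpsi1, E by auto. reflexivity. }
  assert (Hpost2b : forall i, (i < N)%nat -> post U Uinv Rr N eps psi1 i <= P).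
  { intros i Hi. destruct (Nat.ltb i a1) eqn:E. rewrite Hpost2a; auto. lra.
    rewrite (post_f psi1 i) by (rewrite Hfs2, E by auto; reflexivity). rewrite Hcard2.
    rewrite Hpsi1, E by auto. rewrite Jmap1.
    assert (Hz : 0 <= INR (N - a1 - 1) * eps <= K) by (split; [apply kle0|apply nat_le_R; lia]).
    assert (HRz := R_nonneg _ (proj1 Hz)).
    assert (0 <= U (p0 + del)) by (apply (U_nonneg U Uinv HU); lra).
    rewrite HP. apply (Uinv_le U Uinv HU); lra. }
  assert (H0a1 : Nat.ltb 0 a1 = true) by (apply Nat.ltb_lt; lia).
  assert (HN0 : (0 < N)%nat) by lia.
  assert (Hgap2 : gap N (post U Uinv Rr N eps psi1) = 1 - P).
  { unfold gap. rewrite (maxphase_eq N _ P 0%nat HN0). reflexivity. apply Hpost2a; auto. auto. }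
  set (F := [(a1, del); ((N - a1)%nat, 1 - P)]).
  assert (Hreal : realizes U Uinv Rr N eps phi0 F).
  { split.
    - split.
      + intros i Hi. unfold phi0. destruct (Nat.ltb i a1); lra.
      + exists 0%nat. split; auto. unfold phi0. rewrite H0a1. reflexivity.
    - simpl. split; auto. split; [symmetry; auto|]. fold psi1.
      split.
      + intros i Hi HT. rewrite HA1 in HT by auto. rewrite Hfs2, HT by auto. reflexivity.
      + split; auto. split; [symmetry; auto|].
        exists 0%nat. split; auto. split. rewrite HA1; auto.
        apply fireset_at_one. apply at_one_true. unfold evolve. rewrite Hpost2a; auto. ring. }
  assert (Htrig : trigger_invariant U Uinv Rr N eps F).
  { intros phi Hr i Hi Hp. rewrite (trig_final phi F i Hr Hi Hp). unfold F. simpl. rewrite Jmap1.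
    fold c p0 K. fold P. ring. }
  assert (HM := Hinv F (ex_intro _ phi0 Hreal) Htrig (ex_intro _ del (ex_intro _ _ eq_refl)) a Ha).
  unfold F in HM. simpl in HM. fold c x in HM. rewrite HJ in HM. fold K in HM.
  assert (Hlt : Hmap U Uinv K (q0 + del) < w).
  { unfold Hmap. apply (Uinv_lt_w U Uinv HU).
    - assert (0 <= U (q0 + del)) by (apply (U_nonneg U Uinv HU); lra). lra.
    - lra. }
  assert (HPge : Hmap U Uinv K p0 <= P).
  { apply (Hmap_mono U Uinv HU); lra. }
  unfold w, eta in Hlt. lra.
Qed.

End A3.

End Net.

Theorem mainTheorem6 (U Uinv Rr : R -> R) (N : nat) (eps : R) (a1 : nat) :
  rise_function U Uinv ->
  neuronal_reset Rr ->
  0 < eps -> INR (N - 1) * eps < 1 ->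
  (2 <= a1 <= N)%nat ->
  (icpd U Uinv ->
     ((forall a, (1 <= a <= a1 - 1)%nat -> condA U Uinv Rr N eps a1 a) ->
        invariant_under_return U Uinv Rr N eps a1) /\
     (invariant_under_return U Uinv Rr N eps a1 ->
        forall a, (1 <= a <= a1 - 1)%nat -> condB U Uinv Rr N eps a1 a)) /\
  (dcpd U Uinv ->
     ((forall a, (1 <= a <= a1 - 1)%nat -> condB U Uinv Rr N eps a1 a) ->
        invariant_under_return U Uinv Rr N eps a1) /\
     (invariant_under_return U Uinv Rr N eps a1 ->
        forall a, (1 <= a <= a1 - 1)%nat -> condA U Uinv Rr N eps a1 a)).
Proof.
  intros HU HR Heps HN Ha1.
  assert (HB : invariant_under_return U Uinv Rr N eps a1 ->
     forall a, (1 <= a <= a1 - 1)%nat -> condB U Uinv Rr N eps a1 a).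
  { intros Hinv. destruct (Nat.eq_dec a1 N) as [E|E].
    - apply (nec_B_N U Uinv Rr N eps HU HR Heps HN a1 Ha1 E Hinv).
    - apply (nec_B_lt U Uinv Rr N eps HU HR Heps HN a1 Ha1 ltac:(lia) Hinv). }
  split.
  - intro Hi. split.
    + apply (suff_icpd U Uinv Rr N eps HU HR Heps HN a1 Ha1 Hi).
    + exact HB.
  - intro Hd. split.
    + apply (suff_dcpd U Uinv Rr N eps HU HR Heps HN a1 Ha1 Hd).
    + intros Hinv a Ha. apply (A_from_B U Uinv Rr N eps HU HR Heps HN a1 Ha1 Hd a Ha). apply HB; auto.
Qed.
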